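(* With $R$, $I$, $\Gamma$, $\mathcal{C}$, $\mathcal{D}$ and $\Xi:\mathcal{C}\to\mathcal{D}$ as in the context, define $\Psi:\mathcal{D}\to\mathcal{C}$ as follows. For $\rho=(M_u,M_v,\psi_e,\psi_f)\in\mathcal{D}$, let $M=(S_1\otimes_{\mathbb{K}}M_u)\oplus M_v$ with $x((rf_1)\otimes m_u,m_v)=((xrf_1)\otimes m_u,\psi_f(m_v))$ and $y((rf_1)\otimes m_u,m_v)=((yrf_1)\otimes m_u+f_1\otimes\psi_e(m_v),\psi_f^{-1}(m_v))$, and let $\alpha$ be the inclusion of $M_v$ into $M$ (with $M/IM$ identified with $M_v$); set $\Psi(\rho)=(M,\alpha)$. For a morphism $\varphi=(\varphi_u,\varphi_v)$ in $\mathcal{D}$ set $\Psi(\varphi)=(\mathrm{id}_{S_1}\otimes\varphi_u)\oplus\varphi_v$. Then $\Psi$ is a functor $\mathcal{D}\to\mathcal{C}$, and $\Xi$ and $\Psi$ induce an equivalence of categories $\mathcal{C}\cong\mathcal{D}$.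
   Context: $\mathbb{K}$ is a field, $R=\mathbb{K}\langle x,y\rangle/(xy-1)$, $I=\langle1-yx\rangle$, $f_1=1-yx$, $S_1=Rf_1$. $\Gamma$ is the quiver with vertices $u,v$, an arrow $e:v\to u$ and a loop $f$ at $v$; a representation is $(M_u,M_v,\psi_e:M_v\to M_u,\psi_f:M_v\to M_v)$, and $\mathcal{D}$ is the full subcategory of representations with $\psi_f$ invertible. $\mathcal{C}$ is the category whose objects are weak splitting pairs $(M,\alpha)$: $M$ a left $R$-module and $\alpha:M/IM\to M$ a $\mathbb{K}[x]$-linear splitting of $M\to M/IM$; morphisms $(M,\alpha)\to(N,\beta)$ are $R$-linear $\varphi:M\to N$ with $\operatorname{im}(\varphi\circ\alpha)\subseteq\operatorname{im}\beta$. $\Xi(M,\alpha)=(M_0,\operatorname{im}\alpha,\psi_e,\psi_f)$, where $M_0=\{m\in M:xm=0\}$, $\psi_f$ is multiplication by $x$ on $\operatorname{im}\alpha$, and $\psi_e(m)=m_1$ where $ym=m_1+m_2$ with $m_1\in IM$, $m_2\in\operatorname{im}\alpha$; on morphisms $\Xi$ takes restrictions to $M_0$ and $\operatorname{im}\alpha$. *)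

(* Defs.v *)
From HB Require Import structures.
From mathcomp Require Import all_boot all_algebra.
From mathcomp Require Import boolp functions.
Unset Printing Implicit Defensive.
Import GRing.Theory.
Local Open Scope ring_scope.

Record subspace (K : fieldType) (V : lmodType K) := Subspace {
  sp_mem : V -> Prop;
  sp_0 : sp_mem 0;
  sp_lin : forall (a : K) u v, sp_mem u -> sp_mem v -> sp_mem (a *: u + v) }.
Arguments subspace {K} V.
Arguments Subspace {K V} sp_mem sp_0 sp_lin.
Arguments sp_mem {K V} s _. Arguments sp_0 {K V} s. Arguments sp_lin {K V} s a u v _ _.

Section SpType.
Context {K : fieldType} {V : lmodType K} (S : subspace V).
Definition sp_pred : {pred V} := fun v => `[< sp_mem S v >].
Lemma sp_pred_closed : GRing.submod_closed sp_pred.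
Proof.
split; first by apply/asboolP; exact: sp_0.
by move=> a u v /asboolP Hu /asboolP Hv; apply/asboolP; exact: sp_lin.
Qed.
HB.instance Definition _ := GRing.isSubmodClosed.Build K V sp_pred sp_pred_closed.
Record sptype := SpElem { spval : V; spvalP : spval \in sp_pred }.
HB.instance Definition _ := [isSub for spval].
HB.instance Definition _ := [Choice of sptype by <:].
HB.instance Definition _ := [SubChoice_isSubLmodule of sptype by <:].

(* the element v of V seen in S (0 if v is not in S) *)
Definition sp_in (v : V) : sptype :=
  match pselect (sp_mem S v) with
  | left H => SpElem v (asboolT H)
  | right _ => 0
  end.
End SpType.
Arguments sp_in {K V} S v.
Arguments spval {K V S} s. Arguments spvalP {K V S} s. Arguments SpElem {K V S} spval spvalP.

Section KerIm.
Context {K : fieldType} {V W : lmodType K} (f : {linear V -> W}).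
Lemma ker_sp0 : f 0 = 0. Proof. exact: linear0. Qed.
Lemma ker_splin (a : K) u v : f u = 0 -> f v = 0 -> f (a *: u + v) = 0.
Proof. by move=> Hu Hv; rewrite linearP Hu Hv scaler0 addr0. Qed.
Definition ker_sp : subspace V := Subspace _ ker_sp0 ker_splin.
Lemma im_sp0 : exists u, f u = 0. Proof. by exists 0; exact: linear0. Qed.
Lemma im_splin (a : K) w w' :
  (exists u, f u = w) -> (exists u, f u = w') -> exists u, f u = a *: w + w'.
Proof. by move=> [u <-] [u' <-]; exists (a *: u + u'); rewrite linearP. Qed.
Definition im_sp : subspace W := Subspace _ im_sp0 im_splin.
End KerIm.

Definition restr {K : fieldType} {V W : lmodType K} (f : V -> W)
  (S : subspace V) (T : subspace W) : sptype S -> sptype T :=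
  fun v => sp_in T (f (spval v)).


Section LinOr0.
Context {K : fieldType} {U W : lmodType K}.
Definition lin_or0 (g : U -> W) : U -> W :=
  if pselect (linear g) then g else (fun _ => 0).
Lemma lin_or0_linear (g : U -> W) : linear (lin_or0 g).
Proof.
rewrite /lin_or0; destruct (pselect (linear g)) as [H|H]; first exact: H.
by move=> a u v; rewrite scaler0 addr0.
Qed.
HB.instance Definition _ (g : U -> W) :=
  GRing.isLinear.Build K U W *:%R (lin_or0 g) (lin_or0_linear g).
End LinOr0.

(* R = K<x,y>/(xy - 1): a left R-module is a K-vector space M with two      *)
(* K-linear endomorphisms x, y (the actions of x and y) with x y = 1.       *)

(* data of a pair (M, alpha); alpha is encoded as the K-linear endomorphism
   alpha o pi of M, where pi : M -> M/IM is the projection *)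
Record WSP (K : fieldType) := WSPair {
  wM : lmodType K;
  wx : {linear wM -> wM};
  wy : {linear wM -> wM};
  walpha : {linear wM -> wM} }.
Arguments wM {K} w. Arguments wx {K} w. Arguments wy {K} w. Arguments walpha {K} w.

Section WSPdefs.
Context {K : fieldType} (A : WSP K).
Local Notation M := (wM A).
Local Notation x := (wx A).
Local Notation y := (wy A).
Local Notation alpha := (walpha A).

Definition is_Rmodule : Prop := forall m : M, x (y m) = m.

(* m lies in IM, where I = <1 - yx> is the two-sided ideal of R generated by
   f_1 = 1 - yx:  IM = R f_1 R M = R f_1 M is the R-submodule of M generated by
   the elements (1 - yx) n, n in M *)
Definition in_IM (m : M) : Prop :=
  forall P : M -> Prop,
    P 0 ->
    (forall (a : K) u v, P u -> P v -> P (a *: u + v)) ->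
    (forall u, P u -> P (x u)) ->
    (forall u, P u -> P (y u)) ->
    (forall n, P (n - y (x n))) ->
    P m.

(* alpha = alpha0 o pi for a K[x]-linear splitting alpha0 : M/IM -> M of pi:
   alpha is K-linear (built in), commutes with x, vanishes on IM (so factors
   through pi), and pi o alpha0 = id, i.e. m - alpha m lies in IM *)
Definition is_weak_splitting : Prop :=
  [/\ forall m, alpha (x m) = x (alpha m),
      forall m, in_IM m -> alpha m = 0
    & forall m, in_IM (m - alpha m)].

Definition is_WSP_obj : Prop := is_Rmodule /\ is_weak_splitting.
End WSPdefs.

Definition is_WSP_hom {K : fieldType} (A B : WSP K) (phi : wM A -> wM B) : Prop :=
  [/\ linear phi,
      forall m, phi (wx A m) = wx B (phi m),
      forall m, phi (wy A m) = wy B (phi m)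
    & forall m, exists n, phi (walpha A m) = walpha B n].


(* The quiver Gamma: vertices u, v, arrow e : v -> u, loop f at v.          *)

Record QRep (K : fieldType) := QuivRep {
  Mu : lmodType K;
  Mv : lmodType K;
  psi_e : {linear Mv -> Mu};
  psi_f : {linear Mv -> Mv} }.
Arguments Mu {K} q. Arguments Mv {K} q. Arguments psi_e {K} q. Arguments psi_f {K} q.

Definition is_D_obj {K : fieldType} (rho : QRep K) : Prop := bijective (psi_f rho).

Definition is_D_hom {K : fieldType} (rho sigma : QRep K)
  (phu : Mu rho -> Mu sigma) (phv : Mv rho -> Mv sigma) : Prop :=
  [/\ linear phu, linear phv,
      forall m, phu (psi_e rho m) = psi_e sigma (phv m)
    & forall m, phv (psi_f rho m) = psi_f sigma (phv m)].


Section Xi.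
Context {K : fieldType}.

Definition M0_sp (A : WSP K) : subspace (wM A) := ker_sp (wx A).
Definition imalpha_sp (A : WSP K) : subspace (wM A) := im_sp (walpha A).


(* psi_e(m) = m_1, where y m = m_1 + m_2 with m_1 in IM and m_2 in im alpha;
   with alpha encoded as alpha0 o pi, m_2 = alpha (y m), m_1 = y m - alpha (y m) *)
Definition Xi_obj (A : WSP K) : QRep K :=
  @QuivRep K (sptype (M0_sp A)) (sptype (imalpha_sp A))
    (lin_or0 (restr (fun m => wy A m - walpha A (wy A m)) (imalpha_sp A) (M0_sp A)))
    (lin_or0 (restr (wx A) (imalpha_sp A) (imalpha_sp A))).

Definition Xi_hom_u (A B : WSP K) (phi : wM A -> wM B) :
  Mu (Xi_obj A) -> Mu (Xi_obj B) := restr phi (M0_sp A) (M0_sp B).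
Definition Xi_hom_v (A B : WSP K) (phi : wM A -> wM B) :
  Mv (Xi_obj A) -> Mv (Xi_obj B) := restr phi (imalpha_sp A) (imalpha_sp B).
End Xi.


(* S_1 = R f_1 has K-basis (y^i f_1)_{i in nat} (x f_1 = 0), so             *)
(* S_1 (x)_K M_u is modelled as the finitely supported sequences            *)
(* s : nat -> M_u, s = sum_i (y^i f_1) (x) s i.                             *)

Section Psi.
Context {K : fieldType}.

Definition finsupp_sp (U : lmodType K) : subspace (nat -> U).
Proof.
refine (@Subspace K (nat -> U) (fun s => exists n, forall i, (n <= i)%N -> s i = 0) _ _).
- by exists 0%N.
- move=> a u v [n Hn] [n' Hn']; exists (maxn n n') => i Hi.
  have -> : (a *: u + v) i = a *: u i + v i by [].
  rewrite Hn ?Hn' ?scaler0 ?addr0 //.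
  + by apply: leq_trans Hi; exact: leq_maxr.
  + by apply: leq_trans Hi; exact: leq_maxl.
Defined.


Definition S1tensor (U : lmodType K) : lmodType K := sptype (finsupp_sp U).

Definition mkS1 {U : lmodType K} (s : nat -> U) : S1tensor U := sp_in (finsupp_sp U) s.

(* the inverse of a bijection (identity if there is none) *)
Definition finv {T : Type} (f : T -> T) : T -> T :=
  match pselect (exists g : T -> T, cancel f g /\ cancel g f) with
  | left H => proj1_sig (cid H)
  | right _ => id
  end.

(* x ((y^i f_1) (x) m, m_v) = ((x y^i f_1) (x) m, psi_f m_v),
   with x y^(i+1) f_1 = y^i f_1 and x f_1 = 0 *)
Definition Psi_x_fun (rho : QRep K) (p : S1tensor (Mu rho) * Mv rho) :
    S1tensor (Mu rho) * Mv rho :=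
  (mkS1 (fun i => spval p.1 i.+1), psi_f rho p.2).

(* y ((y^i f_1) (x) m, m_v) = ((y^(i+1) f_1) (x) m + f_1 (x) psi_e m_v, psi_f^-1 m_v) *)
Definition Psi_y_fun (rho : QRep K) (p : S1tensor (Mu rho) * Mv rho) :
    S1tensor (Mu rho) * Mv rho :=
  (mkS1 (fun i => if i is j.+1 then spval p.1 j else psi_e rho p.2),
   finv (psi_f rho) p.2).

(* alpha = inclusion of M_v, composed with pi : M -> M/IM = M_v *)
Definition Psi_alpha_fun (rho : QRep K) (p : S1tensor (Mu rho) * Mv rho) :
    S1tensor (Mu rho) * Mv rho := (0, p.2).



Definition Psi_obj (rho : QRep K) : WSP K :=
  @WSPair K (S1tensor (Mu rho) * Mv rho)%type
    (lin_or0 (Psi_x_fun rho)) (lin_or0 (Psi_y_fun rho)) (lin_or0 (Psi_alpha_fun rho)).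

Definition Psi_hom (rho sigma : QRep K) (phu : Mu rho -> Mu sigma)
    (phv : Mv rho -> Mv sigma) : wM (Psi_obj rho) -> wM (Psi_obj sigma) :=
  fun p => (mkS1 (fun i => phu (spval p.1 i)), phv p.2).
End Psi.

(* Main.v *)
From Pilot Require Import Defs.
From HB Require Import structures.
From mathcomp Require Import all_boot all_algebra.
From mathcomp Require Import boolp functions.
Import GRing.Theory.
Local Open Scope ring_scope.

Section Gen.
Context {K : fieldType}.

Lemma lin_or0E {U W : lmodType K} (g : U -> W) : linear g -> forall u, lin_or0 g u = g u.
Proof. by move=> Hg u; rewrite /lin_or0; case: pselect. Qed.

Lemma spvalM {V : lmodType K} {S : subspace V} (s : sptype S) : sp_mem S (spval s).
Proof. by move: (spvalP s); rewrite unfold_in /sp_pred => /asboolP. Qed.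

Lemma sp_inK {V : lmodType K} (S : subspace V) v : sp_mem S v -> spval (sp_in S v) = v.
Proof. by move=> H; rewrite /sp_in; case: pselect. Qed.

Lemma sp_eq {V : lmodType K} {S : subspace V} (s t : sptype S) : spval s = spval t -> s = t.
Proof. exact: val_inj. Qed.

Lemma sp_in_val {V : lmodType K} (S : subspace V) (s : sptype S) : sp_in S (spval s) = s.
Proof. apply: sp_eq; exact: sp_inK (spvalM s). Qed.

Lemma sp_in0 {V : lmodType K} (S : subspace V) : sp_in S 0 = 0.
Proof. apply: sp_eq; rewrite sp_inK //; exact: sp_0. Qed.

Section LinF.
Context {V W : lmodType K} (f : V -> W) (Hf : linear f).
Lemma linP a u v : f (a *: u + v) = a *: f u + f v.
Proof. exact: Hf. Qed.
Lemma linD u v : f (u + v) = f u + f v.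
Proof. have := linP 1 u v; by rewrite scale1r scale1r. Qed.
Lemma lin0 : f 0 = 0.
Proof. apply: (addrI (f 0)); rewrite addr0 -linD; by rewrite addr0. Qed.
Lemma linZ a u : f (a *: u) = a *: f u.
Proof. by rewrite -[a *: u]addr0 linP lin0 addr0. Qed.
Lemma linN u : f (- u) = - f u.
Proof. by rewrite -scaleN1r linZ scaleN1r. Qed.
Lemma linB u v : f (u - v) = f u - f v.
Proof. by rewrite linD linN. Qed.
End LinF.

Lemma restr_spec {V W : lmodType K} (f : V -> W) S T (s : sptype S) :
  (forall v, sp_mem S v -> sp_mem T (f v)) -> spval (restr f S T s) = f (spval s).
Proof. by move=> H; rewrite /restr sp_inK //; apply: H; exact: spvalM. Qed.

Lemma restr_linear {V W : lmodType K} (f : V -> W) S T : linear f ->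
  (forall v, sp_mem S v -> sp_mem T (f v)) -> linear (restr f S T).
Proof.
move=> Hf H a u v; apply: sp_eq.
by rewrite /= !restr_spec //= (linP f Hf).
Qed.

Lemma iter_lin {V : lmodType K} (f : {linear V -> V}) i a u v :
  iter i f (a *: u + v) = a *: iter i f u + iter i f v.
Proof. by elim: i => //= i ->; rewrite linearP. Qed.

Lemma iter_lin0 {V : lmodType K} (f : {linear V -> V}) i : iter i f 0 = 0.
Proof. by elim: i => //= i ->; rewrite linear0. Qed.

Lemma iter_zero {V : lmodType K} (f : {linear V -> V}) N u :
  iter N f u = 0 -> forall N', (N <= N')%N -> iter N' f u = 0.
Proof.
move=> H N' HN; rewrite -(subnK HN) iterD H; exact: iter_lin0.
Qed.
End Gen.
Arguments linP {K V W f} Hf. Arguments linD {K V W f} Hf. Arguments lin0 {K V W f} Hf.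
Arguments linZ {K V W f} Hf. Arguments linN {K V W f} Hf. Arguments linB {K V W f} Hf.
Arguments iter_zero {K V f N u}.

Section IM.
Context {K : fieldType} (A : WSP K).
Local Notation x := (wx A).
Local Notation y := (wy A).
Local Notation al := (walpha A).

Lemma IM0 : in_IM A 0.
Proof. by move=> P H0. Qed.
Lemma IMlin a u v : in_IM A u -> in_IM A v -> in_IM A (a *: u + v).
Proof.
move=> Hu Hv; rewrite /in_IM => P H0 Hl Hx Hy Hf; apply: (Hl); [exact: (Hu P H0 Hl Hx Hy Hf) | exact: (Hv P H0 Hl Hx Hy Hf)].
Qed.
Lemma IMD u v : in_IM A u -> in_IM A v -> in_IM A (u + v).
Proof. by move=> Hu Hv; rewrite -[u]scale1r; apply: IMlin. Qed.
Lemma IMZ a u : in_IM A u -> in_IM A (a *: u).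
Proof. by move=> Hu; rewrite -[a *: u]addr0; apply: IMlin => //; exact: IM0. Qed.
Lemma IMB u v : in_IM A u -> in_IM A v -> in_IM A (u - v).
Proof. by move=> Hu Hv; apply: IMD => //; rewrite -scaleN1r; apply: IMZ. Qed.
Lemma IMx u : in_IM A u -> in_IM A (x u).
Proof. move=> Hu; rewrite /in_IM => P H0 Hl Hx Hy Hf; apply: (Hx); exact: (Hu P H0 Hl Hx Hy Hf). Qed.
Lemma IMy u : in_IM A u -> in_IM A (y u).
Proof. move=> Hu; rewrite /in_IM => P H0 Hl Hx Hy Hf; apply: (Hy); exact: (Hu P H0 Hl Hx Hy Hf). Qed.
Lemma IMf n : in_IM A (n - y (x n)).
Proof. by move=> P H0 Hl Hx Hy Hf; apply: Hf. Qed.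

Lemma IM_nil (Hmod : is_Rmodule A) m : in_IM A m -> exists N, iter N x m = 0.
Proof.
move=> Hm; apply: (Hm (fun m => exists N, iter N x m = 0)).
- by exists 0%N.
- move=> a u v [Nu Hu] [Nv Hv]; exists (maxn Nu Nv).
  rewrite iter_lin (iter_zero Hu) ?leq_maxl // (iter_zero Hv) ?leq_maxr //.
  by rewrite scaler0 addr0.
- move=> u [N Hu]; exists N; rewrite -iterSr; apply: (iter_zero Hu); exact: leqnSn.
- move=> u [N Hu]; exists N.+1; by rewrite iterSr Hmod.
- move=> n; exists 1%N => /=; by rewrite linearB Hmod subrr.
Qed.

Hypothesis HA : is_WSP_obj A.

Lemma al_idem m : al (al m) = al m.
Proof.
case: HA => _ [_ Ha0 Hs]; move: (Ha0 _ (Hs m)); rewrite linearB => /eqP.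
by rewrite subr_eq0 => /eqP H; rewrite -H.
Qed.

Lemma al_IM m : in_IM A m -> al m = 0.
Proof. by case: HA => _ [_ Ha0 Hs]; apply: Ha0. Qed.

Lemma al_x m : al (x m) = x (al m).
Proof. by case: HA => _ [Hax _ _]. Qed.

Lemma xy m : x (y m) = m.
Proof. by case: HA. Qed.

Lemma al_split m : in_IM A (m - al m).
Proof. by case: HA => _ [_ _ Hs]. Qed.

Lemma al_im w : sp_mem (imalpha_sp A) w -> al w = w.
Proof. by case=> u <-; rewrite al_idem. Qed.

Lemma al_yx w : sp_mem (imalpha_sp A) w -> al (y (x w)) = w.
Proof.
move=> Hw; have := al_IM _ (IMf w); rewrite linearB (al_im w Hw) => /eqP.
by rewrite subr_eq0 => /eqP <-.
Qed.

Lemma al_IMeq u v : in_IM A (u - v) -> al u = al v.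
Proof. by move/al_IM/eqP; rewrite linearB subr_eq0 => /eqP. Qed.

Lemma M0_IM u : x u = 0 -> in_IM A u.
Proof. by move=> Hu; have := IMf u; rewrite Hu linear0 subr0. Qed.
End IM.
Arguments al_IM {K A} HA {m}. Arguments al_im {K A} HA {w}. Arguments al_IMeq {K A} HA {u v}.
Arguments al_yx {K A} HA {w}. Arguments IMZ {K A} a {u}. Arguments IMlin {K A} a {u v}.
Arguments IMD {K A u v}. Arguments IMB {K A u v}. Arguments IMx {K A u}. Arguments IMy {K A u}.
Arguments IMf {K A} n. Arguments IM0 {K A}. Arguments M0_IM {K A u}.
Arguments al_idem {K A} HA m. Arguments al_x {K A} HA m. Arguments xy {K A} HA m.
Arguments al_split {K A} HA m. Arguments IM_nil {K A} Hmod {m}.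

Section Hom.
Context {K : fieldType} (A B : WSP K) (phi : wM A -> wM B).
Hypothesis Hphi : is_WSP_hom A B phi.

Lemma hom_lin : linear phi. Proof. by case: Hphi. Qed.
Lemma hom_x m : phi (wx A m) = wx B (phi m). Proof. by case: Hphi. Qed.
Lemma hom_y m : phi (wy A m) = wy B (phi m). Proof. by case: Hphi. Qed.

Lemma hom_IM m : in_IM A m -> in_IM B (phi m).
Proof.
move=> Hm; apply: (Hm (fun m => in_IM B (phi m))).
- rewrite (lin0 hom_lin); exact: IM0.
- by move=> a u v Hu Hv; rewrite (linP hom_lin); apply: IMlin.
- by move=> u Hu; rewrite hom_x; apply: IMx.
- by move=> u Hu; rewrite hom_y; apply: IMy.
- by move=> n; rewrite (linB hom_lin) hom_y hom_x; apply: IMf.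
Qed.

Lemma hom_iter i m : phi (iter i (wx A) m) = iter i (wx B) (phi m).
Proof. by elim: i => //= i <-; rewrite hom_x. Qed.

Lemma hom_M0 v : sp_mem (M0_sp A) v -> sp_mem (M0_sp B) (phi v).
Proof. by move=> Hv; rewrite /= -hom_x Hv (lin0 hom_lin). Qed.

Lemma hom_im v : sp_mem (imalpha_sp A) v -> sp_mem (imalpha_sp B) (phi v).
Proof. case=> u <-; case: Hphi => _ _ _ H; case: (H u) => n ->; by exists n. Qed.

Hypotheses (HA : is_WSP_obj A) (HB : is_WSP_obj B).
Lemma hom_al m : phi (walpha A m) = walpha B (phi m).
Proof.
have Hi : sp_mem (imalpha_sp B) (phi (walpha A m)) by apply: hom_im; exists m.
rewrite -(al_im HB Hi); apply: al_IMeq => //.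
rewrite -(linB hom_lin); apply: hom_IM.
have := IMZ (-1) (al_split HA m); by rewrite scaleN1r opprB.
Qed.
End Hom.
Arguments hom_lin {K A B phi}. Arguments hom_x {K A B phi}. Arguments hom_y {K A B phi}.
Arguments hom_IM {K A B phi}. Arguments hom_iter {K A B phi}. Arguments hom_M0 {K A B phi}.
Arguments hom_im {K A B phi}. Arguments hom_al {K A B phi}.

Section XiFacts.
Context {K : fieldType} (A : WSP K) (HA : is_WSP_obj A).
Local Notation x := (wx A).
Local Notation y := (wy A).
Local Notation al := (walpha A).

Lemma x_im w : sp_mem (imalpha_sp A) w -> sp_mem (imalpha_sp A) (x w).
Proof. case=> u <-; exists (x u); exact: al_x. Qed.

Lemma e_M0 w : sp_mem (imalpha_sp A) w -> sp_mem (M0_sp A) (y w - al (y w)).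
Proof. move=> Hw; rewrite /= linearB -(al_x HA) !(xy HA) (al_im HA Hw) subrr //. Qed.

Lemma e_lin : linear (fun m => y m - al (y m)).
Proof. move=> a u v /=; rewrite !linearP /=. by rewrite scalerN scalerBr addrACA. Qed.

Lemma Xi_f_spec v : spval (psi_f (Xi_obj A) v) = x (spval v).
Proof.
change (spval (lin_or0 (restr x (imalpha_sp A) (imalpha_sp A)) v) = x (spval v)).
rewrite lin_or0E ?restr_spec //; last apply: restr_linear.
all: try exact: x_im.
by move=> a u w; rewrite linearP.
Qed.

Lemma Xi_e_spec v : spval (psi_e (Xi_obj A) v) = y (spval v) - al (y (spval v)).
Proof.
change (spval (lin_or0 (restr (fun m => y m - al (y m)) (imalpha_sp A) (M0_sp A)) v)
   = y (spval v) - al (y (spval v))).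
rewrite lin_or0E ?restr_spec //; last apply: restr_linear.
all: try exact: e_M0.
exact: e_lin.
Qed.

Lemma Xi_D : is_D_obj (Xi_obj A).
Proof.
exists (fun v => sp_in (imalpha_sp A) (al (y (spval v)))).
- move=> v; apply: sp_eq; rewrite sp_inK; last by eexists.
  rewrite Xi_f_spec; apply: al_yx => //; exact: spvalM.
- move=> v; apply: sp_eq; rewrite Xi_f_spec sp_inK; last by eexists.
  rewrite -al_x // xy // al_im //; exact: spvalM.
Qed.
End XiFacts.
Arguments Xi_e_spec {K A} HA v. Arguments Xi_f_spec {K A} HA v. Arguments e_M0 {K A} HA {w}.
Arguments x_im {K A} HA {w}. Arguments Xi_D {K A} HA.

Section XiFun.
Context {K : fieldType}.

Lemma Xi_hom_D (A B : WSP K) (phi : wM A -> wM B) :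
  is_WSP_obj A -> is_WSP_obj B -> is_WSP_hom A B phi ->
  is_D_hom (Xi_obj A) (Xi_obj B) (Xi_hom_u A B phi) (Xi_hom_v A B phi).
Proof.
move=> HA HB Hphi; have Hl := hom_lin Hphi.
split.
- apply: restr_linear => //; exact: (hom_M0 Hphi).
- apply: restr_linear => //; exact: (hom_im Hphi).
- move=> m; apply: sp_eq.
  rewrite /Xi_hom_u restr_spec; last exact: (hom_M0 Hphi).
  rewrite (Xi_e_spec HA) (Xi_e_spec HB) /Xi_hom_v restr_spec; last exact: (hom_im Hphi).
  rewrite (linB Hl); congr (_ - _); first exact: hom_y.
  have := hom_al Hphi HA HB (wy A (spval m)) => ->; by rewrite hom_y.
- move=> m; apply: sp_eq.
  rewrite /Xi_hom_v restr_spec; last exact: (hom_im Hphi).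
  rewrite (Xi_f_spec HA) (Xi_f_spec HB) restr_spec; last exact: (hom_im Hphi).
  exact: hom_x.
Qed.

Lemma Xi_id (A : WSP K) : Xi_hom_u A A id =1 id /\ Xi_hom_v A A id =1 id.
Proof. by split=> v; rewrite /Xi_hom_u /Xi_hom_v /restr sp_in_val. Qed.

Lemma Xi_comp (A B C : WSP K) (phi : wM A -> wM B) (chi : wM B -> wM C) :
  is_WSP_hom A B phi -> is_WSP_hom B C chi ->
  Xi_hom_u A C (chi \o phi) =1 Xi_hom_u B C chi \o Xi_hom_u A B phi /\
  Xi_hom_v A C (chi \o phi) =1 Xi_hom_v B C chi \o Xi_hom_v A B phi.
Proof.
move=> Hp Hc; split=> v; apply: sp_eq; rewrite /Xi_hom_u /Xi_hom_v /= !restr_spec //=.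
all: try (move=> w Hw; apply: (hom_M0 Hc); apply: (hom_M0 Hp) Hw).
all: try (move=> w Hw; apply: (hom_im Hc); apply: (hom_im Hp) Hw).
all: try exact: (hom_M0 Hp). all: try exact: (hom_im Hp).
all: try exact: (hom_M0 Hc). all: exact: (hom_im Hc).
Qed.
End XiFun.

Notation dfinv := Pilot.Defs.finv.
Section PsiGen.
Context {K : fieldType}.

Definition fsupp {U : lmodType K} (t : nat -> U) := exists n, forall i, (n <= i)%N -> t i = 0.

Lemma S1_fs {U : lmodType K} (s : S1tensor U) : fsupp (spval s).
Proof. exact: (spvalM s). Qed.

Lemma mkS1E {U : lmodType K} (t : nat -> U) : fsupp t -> forall i, spval (mkS1 t) i = t i.
Proof. by move=> H i; rewrite /mkS1 sp_inK. Qed.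

Lemma S1_eq {U : lmodType K} (s t : S1tensor U) : (forall i, spval s i = spval t i) -> s = t.
Proof. by move=> H; apply: sp_eq; apply: funext. Qed.

Lemma fs_shift {U : lmodType K} (t : nat -> U) : fsupp t -> fsupp (fun i => t i.+1).
Proof. by case=> n Hn; exists n => i Hi; apply: Hn; apply: leqW. Qed.

Lemma fs_cons {U : lmodType K} (t : nat -> U) u :
  fsupp t -> fsupp (fun i => if i is j.+1 then t j else u).
Proof. by case=> n Hn; exists n.+1 => [[|i]] // Hi; apply: Hn. Qed.

Lemma fs_map {U W : lmodType K} (f : U -> W) (t : nat -> U) :
  f 0 = 0 -> fsupp t -> fsupp (fun i => f (t i)).
Proof. by move=> H0 [n Hn]; exists n => i Hi; rewrite Hn. Qed.

Lemma fs0 {U : lmodType K} : fsupp (fun _ : nat => (0 : U)).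
Proof. by exists 0%N. Qed.

Definition e0 {U : lmodType K} (u : U) : S1tensor U :=
  mkS1 (fun i => if i is j.+1 then (0 : nat -> U) j else u).

Lemma e0E {U : lmodType K} (u : U) i : spval (e0 u) i = if i is j.+1 then 0 else u.
Proof. by rewrite /e0 mkS1E //; apply: fs_cons; exact: fs0. Qed.

Lemma finv_can {T : Type} (f : T -> T) : bijective f -> cancel f (dfinv f) /\ cancel (dfinv f) f.
Proof.
move=> Hb; rewrite /Defs.finv; case: pselect => [H|H].
  by case: (cid H) => g [H1 H2].
by exfalso; apply: H; case: Hb => g H1 H2; exists g.
Qed.

Lemma finv_lin {U : lmodType K} (f : {linear U -> U}) : bijective f -> linear (dfinv f).
Proof.
move=> /finv_can [H1 H2] a u v; apply: (can_inj H1).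
by rewrite H2 linearP !H2.
Qed.

Lemma finv_comm {U W : lmodType K} (f : U -> U) (g : W -> W) (h : U -> W) :
  bijective f -> bijective g -> (forall m, h (f m) = g (h m)) ->
  forall m, h (dfinv f m) = dfinv g (h m).
Proof.
move=> /finv_can [F1 F2] /finv_can [G1 G2] Hh m.
by rewrite -{2}(F2 m) Hh G1.
Qed.
End PsiGen.

Section Simp.
Context {K : fieldType}.
Lemma sp_valL {V : lmodType K} {S : subspace V} a (s t : sptype S) :
  spval (a *: s + t) = a *: spval s + spval t. Proof. by []. Qed.
Lemma sp_valD {V : lmodType K} {S : subspace V} (s t : sptype S) :
  spval (s + t) = spval s + spval t. Proof. by []. Qed.
Lemma sp_valB {V : lmodType K} {S : subspace V} (s t : sptype S) :
  spval (s - t) = spval s - spval t. Proof. by []. Qed.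
Lemma sp_val0 {V : lmodType K} {S : subspace V} : spval (0 : sptype S) = 0. Proof. by []. Qed.
Lemma fun_L {U : lmodType K} a (u v : nat -> U) i : (a *: u + v) i = a *: u i + v i.
Proof. by []. Qed.
Lemma fun_D {U : lmodType K} (u v : nat -> U) i : (u + v) i = u i + v i.
Proof. by []. Qed.
Lemma fun_B {U : lmodType K} (u v : nat -> U) i : (u - v) i = u i - v i.
Proof. by []. Qed.
Lemma fun_0 {U : lmodType K} i : (0 : nat -> U) i = 0.
Proof. by []. Qed.
Lemma pair_L1 {V W : lmodType K} a (p q : V * W) : (a *: p + q).1 = a *: p.1 + q.1. Proof. by []. Qed.
Lemma pair_L2 {V W : lmodType K} a (p q : V * W) : (a *: p + q).2 = a *: p.2 + q.2. Proof. by []. Qed.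
Lemma pair_D1 {V W : lmodType K} (p q : V * W) : (p + q).1 = p.1 + q.1. Proof. by []. Qed.
Lemma pair_D2 {V W : lmodType K} (p q : V * W) : (p + q).2 = p.2 + q.2. Proof. by []. Qed.
Lemma pair_B1 {V W : lmodType K} (p q : V * W) : (p - q).1 = p.1 - q.1. Proof. by []. Qed.
Lemma pair_B2 {V W : lmodType K} (p q : V * W) : (p - q).2 = p.2 - q.2. Proof. by []. Qed.

Lemma mkS1_shift {U : lmodType K} (s : S1tensor U) i :
  spval (mkS1 (fun i => spval s i.+1)) i = spval s i.+1.
Proof. by rewrite mkS1E //; apply: fs_shift; exact: S1_fs. Qed.
Lemma mkS1_cons {U : lmodType K} (s : S1tensor U) u i :
  spval (mkS1 (fun i => if i is j.+1 then spval s j else u)) i = if i is j.+1 then spval s j else u.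
Proof. by rewrite mkS1E //; apply: fs_cons; exact: S1_fs. Qed.
Lemma mkS1_map {U W : lmodType K} (f : U -> W) (s : S1tensor U) i : f 0 = 0 ->
  spval (mkS1 (fun i => f (spval s i))) i = f (spval s i).
Proof. by move=> H; rewrite mkS1E //; apply: fs_map => //; exact: S1_fs. Qed.
End Simp.

Lemma pair_ext {A B : Type} (p q : A * B) : p.1 = q.1 -> p.2 = q.2 -> p = q.
Proof. by case: p; case: q => ? ? ? ? /= -> ->. Qed.

Section PsiObj.
Context {K : fieldType} (rho : QRep K).
Local Notation P := (Psi_obj rho).
Local Notation f := (psi_f rho).

Lemma Px1 p : (Psi_x_fun rho p).1 = mkS1 (fun i => spval p.1 i.+1). Proof. by []. Qed.
Lemma Px2 p : (Psi_x_fun rho p).2 = f p.2. Proof. by []. Qed.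
Lemma Py1 p : (Psi_y_fun rho p).1 = mkS1 (fun i => if i is j.+1 then spval p.1 j else psi_e rho p.2).
Proof. by []. Qed.
Lemma Py2 p : (Psi_y_fun rho p).2 = dfinv f p.2. Proof. by []. Qed.

Lemma Psix_lin : linear (Psi_x_fun rho).
Proof.
move=> a p q; apply: (@pair_ext (S1tensor (Mu rho)) (Mv rho)); rewrite ?pair_L1 ?pair_L2 ?Px1 ?Px2; last by rewrite pair_L2 linearP.
by apply: S1_eq => i; rewrite (mkS1_shift (a *: p + q).1) [in RHS]sp_valL [in RHS]fun_L (mkS1_shift p.1) (mkS1_shift q.1).
Qed.

Lemma PsixE p : wx P p = Psi_x_fun rho p.
Proof. change (lin_or0 (Psi_x_fun rho) p = Psi_x_fun rho p); exact: (lin_or0E _ Psix_lin p). Qed.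

Lemma Psia_lin : linear (Psi_alpha_fun rho).
Proof.
move=> a p q; apply: (@pair_ext (S1tensor (Mu rho)) (Mv rho)).
  transitivity (a *: (Psi_alpha_fun rho p).1 + (Psi_alpha_fun rho q).1); last by [].
  by rewrite /= scaler0 addr0.
by transitivity (a *: (Psi_alpha_fun rho p).2 + (Psi_alpha_fun rho q).2).
Qed.

Lemma PsiaE p : walpha P p = (0, p.2).
Proof. change (lin_or0 (Psi_alpha_fun rho) p = (0, p.2)); exact: (lin_or0E _ Psia_lin p). Qed.

Hypothesis HD : is_D_obj rho.

Lemma fK : cancel f (dfinv f). Proof. by case: (finv_can _ HD). Qed.
Lemma fKV : cancel (dfinv f) f. Proof. by case: (finv_can _ HD). Qed.
Lemma finv0 : dfinv f 0 = 0. Proof. exact: (lin0 (finv_lin _ HD)). Qed.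

Lemma Psiy_lin : linear (Psi_y_fun rho).
Proof.
move=> a p q; apply: (@pair_ext (S1tensor (Mu rho)) (Mv rho)); last by rewrite pair_L2 !Py2 pair_L2 (linP (finv_lin _ HD)).
apply: S1_eq => i. rewrite (Py1 (a *: p + q)) (pair_L1 a (Psi_y_fun rho p)) (Py1 p) (Py1 q).
rewrite (mkS1_cons (a *: p + q).1) [in RHS](sp_valL a) [in RHS](fun_L a).
rewrite (mkS1_cons p.1) (mkS1_cons q.1); case: i => [|i] //.
by rewrite pair_L2 linearP.
Qed.

Lemma PsiyE p : wy P p = Psi_y_fun rho p.
Proof. change (lin_or0 (Psi_y_fun rho) p = Psi_y_fun rho p); exact: (lin_or0E _ Psiy_lin p). Qed.

Lemma gen_ind (Q : wM P -> Prop) : Q 0 -> (forall u v, Q u -> Q v -> Q (u + v)) ->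
  (forall u, Q u -> Q (wy P u)) -> (forall u, Q (e0 u, 0)) -> forall s, Q (s, 0).
Proof.
move=> Q0 QD Qy Qe s; case: (S1_fs s) => n; elim: n s => [|n IH] s Hs.
  have -> : s = 0 by apply: S1_eq => i; rewrite Hs.
  exact: Q0.
pose s' := mkS1 (fun i => spval s i.+1).
have -> : ((s, 0) : wM P) = wy P (s', 0) + (e0 (spval s 0), 0).
  rewrite PsiyE /Psi_y_fun; congr (_, _).
    apply: S1_eq => i; rewrite sp_valD fun_D mkS1_cons e0E; case: i => [|i] /=.
      by rewrite linear0 add0r.
    by rewrite mkS1_shift addr0.
  by rewrite /= finv0 addr0.
apply: QD; last exact: Qe.
apply: Qy; apply: IH => i Hi; rewrite mkS1_shift; exact: Hs.
Qed.

Lemma Psi_WSP : is_WSP_obj P.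
Proof.
split.
  move=> [s w]; rewrite PsiyE PsixE; apply: (@pair_ext (S1tensor (Mu rho)) (Mv rho)).
    rewrite Px1; apply: S1_eq => i; rewrite (mkS1_shift (Psi_y_fun rho (s, w)).1).
    by rewrite Py1 (mkS1_cons (s, w).1).
  by rewrite Px2 Py2 fKV.
split.
- move=> m; rewrite !PsiaE !PsixE /Psi_x_fun /=; congr (_, _).
  by apply: S1_eq => i; rewrite mkS1E //; exists 0%N.
- move=> m Hm; rewrite PsiaE.
  suff -> : m.2 = 0 by [].
  apply: (Hm (fun m => m.2 = 0)) => //.
  + by move=> a u v Hu Hv; rewrite pair_L2 Hu Hv scaler0 addr0.
  + by move=> u Hu; rewrite PsixE /= Hu linear0.
  + by move=> u Hu; rewrite PsiyE /= Hu finv0.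
  + by move=> n; rewrite pair_B2 PsiyE PsixE /= fK subrr.
- move=> m; have -> : m - walpha P m = (m.1, 0).
    by rewrite PsiaE; case: m => s w; congr (_, _); rewrite /= ?subr0 ?subrr.
  apply: gen_ind.
  + exact: IM0.
  + by move=> u v; apply: IMD.
  + by move=> u; apply: IMy.
  + move=> u; have := IMf ((e0 u, 0) : wM P).
    suff -> : ((e0 u, 0) : wM P) - wy P (wx P (e0 u, 0)) = (e0 u, 0) by [].
    suff -> : wx P (e0 u, 0) = 0 by rewrite linear0 subr0.
    rewrite PsixE; apply: (@pair_ext (S1tensor (Mu rho)) (Mv rho)); last by rewrite Px2 linear0.
    rewrite Px1; apply: S1_eq => i; rewrite (mkS1_shift (e0 u)) e0E //.
Qed.
End PsiObj.
Arguments fK {K rho} HD. Arguments fKV {K rho} HD. Arguments finv0 {K rho} HD.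
Arguments PsiyE {K rho} HD p. Arguments gen_ind {K rho} HD Q. Arguments Psi_WSP {K rho} HD.

Lemma Psi_hom1 {K : fieldType} {rho sigma : QRep K} {phu : Mu rho -> Mu sigma} {phv : Mv rho -> Mv sigma} p :
  (Psi_hom rho sigma phu phv p).1 = mkS1 (fun i => phu (spval p.1 i)).
Proof. by []. Qed.
Lemma Psi_hom2 {K : fieldType} {rho sigma : QRep K} {phu : Mu rho -> Mu sigma} {phv : Mv rho -> Mv sigma} p :
  (Psi_hom rho sigma phu phv p).2 = phv p.2.
Proof. by []. Qed.

Section PsiHom.
Context {K : fieldType} (rho sigma : QRep K) (phu : Mu rho -> Mu sigma) (phv : Mv rho -> Mv sigma).
Hypotheses (Hr : is_D_obj rho) (Hs : is_D_obj sigma) (Hh : is_D_hom rho sigma phu phv).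

Lemma Dh_u : linear phu. Proof. by case: Hh. Qed.
Lemma Dh_v : linear phv. Proof. by case: Hh. Qed.
Lemma Dh_e m : phu (psi_e rho m) = psi_e sigma (phv m). Proof. by case: Hh. Qed.
Lemma Dh_f m : phv (psi_f rho m) = psi_f sigma (phv m). Proof. by case: Hh. Qed.
Let H0u := lin0 Dh_u.
Local Notation Ph := (Psi_hom rho sigma phu phv).

Lemma Psi_hom_WSP : is_WSP_hom (Psi_obj rho) (Psi_obj sigma) Ph.
Proof.
split.
- move=> a p q; apply: (@pair_ext (S1tensor (Mu sigma)) (Mv sigma)).
    rewrite (Psi_hom1 (a *: p + q)) (pair_L1 a (Ph p)) (Psi_hom1 p) (Psi_hom1 q).
    apply: S1_eq => i.
    rewrite (mkS1_map phu (a *: p + q).1 i H0u) [in RHS](sp_valL a) [in RHS](fun_L a).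
    rewrite (mkS1_map phu p.1 i H0u) (mkS1_map phu q.1 i H0u).
    exact: (linP Dh_u a (spval p.1 i) (spval q.1 i)).
  rewrite (Psi_hom2 (a *: p + q)) (pair_L2 a (Ph p)) (Psi_hom2 p) (Psi_hom2 q).
  exact: (linP Dh_v a p.2 q.2).
- move=> p; rewrite !PsixE; apply: (@pair_ext (S1tensor (Mu sigma)) (Mv sigma)).
    rewrite (Psi_hom1 (Psi_x_fun rho p)) (Px1 sigma (Ph p)).
    apply: S1_eq => i.
    rewrite (mkS1_map phu (Psi_x_fun rho p).1 i H0u) (Px1 rho p) (mkS1_shift p.1).
    by rewrite (mkS1_shift (Ph p).1) (Psi_hom1 p) (mkS1_map phu p.1 i.+1 H0u).
  rewrite (Psi_hom2 (Psi_x_fun rho p)) (Px2 rho p) (Px2 sigma (Ph p)) (Psi_hom2 p).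
  exact: Dh_f.
- move=> p; rewrite (PsiyE Hr) (PsiyE Hs); apply: (@pair_ext (S1tensor (Mu sigma)) (Mv sigma)).
    rewrite (Psi_hom1 (Psi_y_fun rho p)) (Py1 sigma (Ph p)).
    apply: S1_eq => i.
    rewrite (mkS1_map phu (Psi_y_fun rho p).1 i H0u) (Py1 rho p) (mkS1_cons p.1).
    rewrite (mkS1_cons (Ph p).1); case: i => [|i].
      by rewrite (Psi_hom2 p) Dh_e.
    by rewrite (Psi_hom1 p) (mkS1_map phu p.1 i H0u).
  rewrite (Psi_hom2 (Psi_y_fun rho p)) (Py2 rho p) (Py2 sigma (Ph p)) (Psi_hom2 p).
  apply: finv_comm => //; exact: Dh_f.
- move=> p; exists ((0, phv p.2) : wM (Psi_obj sigma)); rewrite !PsiaE.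
  apply: (@pair_ext (S1tensor (Mu sigma)) (Mv sigma)); last by [].
  rewrite (Psi_hom1 ((0, p.2) : wM (Psi_obj rho))); apply: S1_eq => i.
  rewrite (mkS1_map phu ((0, p.2) : wM (Psi_obj rho)).1 i H0u).
  exact: H0u.
Qed.
End PsiHom.

Lemma Psi_id {K : fieldType} (rho : QRep K) : Psi_hom rho rho id id =1 id.
Proof.
move=> p; apply: (@pair_ext (S1tensor (Mu rho)) (Mv rho)); last by [].
rewrite (Psi_hom1 p); apply: S1_eq => i.
by rewrite (mkS1_map id p.1 i erefl).
Qed.

Lemma Psi_comp {K : fieldType} (rho sigma tau : QRep K)
  (phu : Mu rho -> Mu sigma) (phv : Mv rho -> Mv sigma)
  (chu : Mu sigma -> Mu tau) (chv : Mv sigma -> Mv tau) :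
  is_D_hom rho sigma phu phv -> is_D_hom sigma tau chu chv ->
  Psi_hom rho tau (chu \o phu) (chv \o phv)
    =1 Psi_hom sigma tau chu chv \o Psi_hom rho sigma phu phv.
Proof.
move=> H1 H2 p.
have H0u := lin0 (Dh_u _ _ _ _ H1); have H0c := lin0 (Dh_u _ _ _ _ H2).
have H0 : (chu \o phu) 0 = 0 by rewrite /= H0u H0c.
apply: (@pair_ext (S1tensor (Mu tau)) (Mv tau)); last by [].
rewrite (Psi_hom1 p) /comp (Psi_hom1 (Psi_hom rho sigma phu phv p)); apply: S1_eq => i.
rewrite (mkS1_map (chu \o phu) p.1 i H0) (mkS1_map chu (Psi_hom rho sigma phu phv p).1 i H0c).
by rewrite (Psi_hom1 p) (mkS1_map phu p.1 i H0u).
Qed.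

Section EtaDef.
Context {K : fieldType}.
Definition nn (A : WSP K) (m : wM A) : wM A := m - walpha A m.
Definition kk (A : WSP K) i (m : wM A) : wM A :=
  iter i (wx A) (nn A m) - wy A (iter i.+1 (wx A) (nn A m)).
Definition etaC (A : WSP K) (m : wM A) : wM (Psi_obj (Xi_obj A)) :=
  (mkS1 (fun i => sp_in (M0_sp A) (kk A i m)), sp_in (imalpha_sp A) (walpha A m)).
Definition etainv (A : WSP K) (p : wM (Psi_obj (Xi_obj A))) : wM A :=
  match pselect (exists m, etaC A m = p) with
  | left H => proj1_sig (cid H)
  | right _ => 0
  end.
End EtaDef.

Lemma iter_kill {K : fieldType} (A : WSP K) N (d : wM A) : iter N (wx A) d = 0 ->
  (forall i, iter i (wx A) d = wy A (iter i.+1 (wx A) d)) -> d = 0.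
Proof.
elim: N d => [|N IH] d H0 Hi //.
have Hx : wx A d = 0.
  apply: IH; first by rewrite -iterSr.
  by move=> i; rewrite -!iterSr; exact: Hi.
by have := Hi 0%N; rewrite /= Hx linear0.
Qed.

Section Eta.
Context {K : fieldType} (A : WSP K) (HA : is_WSP_obj A).
Local Notation x := (wx A).
Local Notation y := (wy A).
Local Notation al := (walpha A).
Local Notation P := (Psi_obj (Xi_obj A)).
Local Notation pe := (@pair_ext (S1tensor (Mu (Xi_obj A))) (Mv (Xi_obj A))).

Lemma kk_M0 i m : sp_mem (M0_sp A) (kk A i m).
Proof. by rewrite /= /kk linearB (xy HA) subrr. Qed.

Lemma kk_fs m : fsupp (fun i => sp_in (M0_sp A) (kk A i m)).
Proof.
case: (IM_nil HA.1 (al_split HA m)) => N HN; exists N => i Hi.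
rewrite /kk /nn (iter_zero HN i Hi) (iter_zero HN i.+1) ?(leqW Hi) //.
by rewrite linear0 subr0 sp_in0.
Qed.

Lemma eta1 m i : spval (spval (etaC A m).1 i) = kk A i m.
Proof.
change (spval (spval (mkS1 (fun i => sp_in (M0_sp A) (kk A i m))) i) = kk A i m).
rewrite (mkS1E _ (kk_fs m)) sp_inK //; exact: kk_M0.
Qed.

Lemma eta2 m : spval (etaC A m).2 = al m.
Proof. by rewrite sp_inK //; exists m. Qed.

Lemma eta_ext (p q : wM P) : (forall i, spval (spval p.1 i) = spval (spval q.1 i)) ->
  spval p.2 = spval q.2 -> p = q.
Proof.
move=> H1 H2; apply: pe; first by apply: S1_eq => i; apply: sp_eq; exact: H1.
by apply: sp_eq.
Qed.

Lemma nn_lin : linear (nn A).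
Proof. by move=> a u v; rewrite /nn linearP scalerBr opprD addrACA. Qed.

Lemma kk_lin i : linear (kk A i).
Proof.
move=> a u v; rewrite /kk (linP nn_lin) !iter_lin linearP.
by rewrite scalerBr opprD addrACA.
Qed.

Lemma eta_lin : linear (etaC A).
Proof.
move=> a u v; apply: eta_ext => [i|].
  rewrite eta1; transitivity (a *: spval (spval (etaC A u).1 i) + spval (spval (etaC A v).1 i));
    last by [].
  by rewrite !eta1 (linP (kk_lin i)).
rewrite eta2; transitivity (a *: spval (etaC A u).2 + spval (etaC A v).2); last by [].
by rewrite !eta2 linearP.
Qed.

Lemma nn_x m : nn A (x m) = x (nn A m).
Proof. by rewrite /nn linearB (al_x HA). Qed.

Lemma kk_x i m : kk A i (x m) = kk A i.+1 m.
Proof. by rewrite /kk nn_x -!iterSr. Qed.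

Lemma eta_x m : etaC A (x m) = wx P (etaC A m).
Proof.
rewrite PsixE; apply: eta_ext => [i|].
  rewrite eta1 (Px1 (Xi_obj A) (etaC A m)) (mkS1_shift (etaC A m).1) eta1.
  exact: kk_x.
by rewrite eta2 (Px2 (Xi_obj A) (etaC A m)) (Xi_f_spec HA) eta2 (al_x HA).
Qed.

Lemma x_nn_y m : x (nn A (y m)) = nn A m.
Proof. by rewrite /nn linearB -(al_x HA) !(xy HA). Qed.

Lemma eta_y m : etaC A (y m) = wy P (etaC A m).
Proof.
have HD := Xi_D HA.
rewrite (PsiyE HD); apply: eta_ext => [i|].
  rewrite eta1 (Py1 (Xi_obj A) (etaC A m)) (mkS1_cons (etaC A m).1); case: i => [|i].
    rewrite (Xi_e_spec HA) eta2 /kk /= x_nn_y /nn linearB.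
    have -> : al (y m) = al (y (al m)).
      apply: (al_IMeq HA); rewrite -linearB; apply: IMy; exact: (al_split HA).
    by rewrite opprB addrC addrA subrK.
  by rewrite eta1 /kk !iterSr !x_nn_y.
rewrite eta2 (Py2 (Xi_obj A) (etaC A m)).
have E : (etaC A m).2 = psi_f (Xi_obj A) (sp_in (imalpha_sp A) (al (y m))).
  apply: sp_eq; rewrite eta2 (Xi_f_spec HA) sp_inK; last by eexists.
  by rewrite -(al_x HA) (xy HA).
by rewrite E (fK HD) sp_inK //; eexists.
Qed.

Lemma eta_al m : exists n, etaC A (al m) = walpha P n.
Proof.
exists (etaC A m); rewrite PsiaE; apply: eta_ext => [i|].
  rewrite eta1; transitivity (0 : wM A); last by [].
  by rewrite /kk /nn (al_idem HA) subrr !iter_lin0 linear0 subrr.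
rewrite eta2; transitivity (spval (etaC A m).2); last by [].
by rewrite eta2 (al_idem HA).
Qed.

Lemma eta_hom : is_WSP_hom A P (etaC A).
Proof. split; [exact: eta_lin | exact: eta_x | exact: eta_y | exact: eta_al]. Qed.

Lemma eta_inj m m' : etaC A m = etaC A m' -> m = m'.
Proof.
move=> E; apply/eqP; rewrite -subr_eq0; apply/eqP.
set d := m - m'.
have Ed : etaC A d = 0 by rewrite /d (linB eta_lin) E subrr.
have Ha : al d = 0 by rewrite -eta2 Ed.
have Hn : nn A d = d by rewrite /nn Ha subr0.
have Hk i : kk A i d = 0 by rewrite -eta1 Ed.
have Hd : in_IM A d by rewrite -Hn; exact: (al_split HA).
case: (IM_nil HA.1 Hd) => N HN.
apply: (@iter_kill _ A N d HN) => i; apply/eqP; rewrite -subr_eq0; apply/eqP.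
by have := Hk i; rewrite /kk Hn.
Qed.

Lemma eta_im0 (w : Mv (Xi_obj A)) : etaC A (spval w) = (0, w).
Proof.
have Hw : al (spval w) = spval w by apply: (al_im HA); exact: spvalM.
apply: eta_ext => [i|].
  rewrite eta1; transitivity (0 : wM A); last by [].
  by rewrite /kk /nn Hw subrr !iter_lin0 linear0 subrr.
by rewrite eta2 Hw.
Qed.

Lemma eta_surj p : exists m, etaC A m = p.
Proof.
have HD := Xi_D HA.
case: p => s w.
have -> : ((s, w) : wM P) = (s, 0) + (0, w).
  by apply: pe => /=; rewrite ?addr0 ?add0r.
have QD : forall u v : wM P, (exists m, etaC A m = u) -> (exists m, etaC A m = v) ->
    exists m, etaC A m = u + v.
  by move=> u v [m1 <-] [m2 <-]; exists (m1 + m2); rewrite (linD eta_lin).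
apply: (QD); last by exists (spval w); exact: eta_im0.
apply: (gen_ind HD (fun p => exists m, etaC A m = p)).
- by exists 0; rewrite (lin0 eta_lin).
- by move=> u v Hu Hv; apply: QD.
- by move=> u [m <-]; exists (y m); rewrite eta_y.
- move=> u; exists (spval u).
  have Hx : x (spval u) = 0 := spvalM u.
  have Ha : al (spval u) = 0 by apply: (al_IM HA); exact: M0_IM.
  apply: eta_ext => [i|].
    rewrite eta1 e0E /kk /nn Ha subr0; case: i => [|i].
      by rewrite /= Hx linear0 subr0.
    by rewrite !iterSr Hx !iter_lin0 linear0 iter_lin0 linear0 subr0.
  by rewrite eta2 Ha.
Qed.

Lemma etaK' p : etaC A (etainv A p) = p.
Proof.
rewrite /etainv; case: pselect => [H|H]; first by case: (cid H).
by exfalso; apply: H; apply: eta_surj.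
Qed.

Lemma etaK m : etainv A (etaC A m) = m.
Proof. apply: eta_inj; exact: etaK'. Qed.

Lemma etainv_hom : is_WSP_hom P A (etainv A).
Proof.
split.
- by move=> a p q; apply: eta_inj; rewrite etaK' (linP eta_lin) !etaK'.
- by move=> p; apply: eta_inj; rewrite etaK' eta_x etaK'.
- by move=> p; apply: eta_inj; rewrite etaK' eta_y etaK'.
- move=> p; exists (spval p.2); rewrite PsiaE -eta_im0 etaK.
  by rewrite (al_im HA) //; exact: spvalM.
Qed.
End Eta.
Arguments eta_ext {K A} p q. Arguments eta1 {K A} HA m i. Arguments eta2 {K A} m.
Arguments etaK {K A} HA m. Arguments etaK' {K A} HA p. Arguments eta_hom {K A} HA.
Arguments etainv_hom {K A} HA.

Lemma eta_nat {K : fieldType} (A B : WSP K) (phi : wM A -> wM B) :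
  is_WSP_obj A -> is_WSP_obj B -> is_WSP_hom A B phi ->
  Psi_hom (Xi_obj A) (Xi_obj B) (Xi_hom_u A B phi) (Xi_hom_v A B phi) \o etaC A
    =1 etaC B \o phi.
Proof.
move=> HA HB Hphi m; rewrite /comp.
have Hl := hom_lin Hphi.
have H0 : Xi_hom_u A B phi 0 = 0.
  apply: sp_eq; rewrite /Xi_hom_u restr_spec; last exact: (hom_M0 Hphi).
  exact: (lin0 Hl).
have Hnn u : phi (nn A u) = nn B (phi u) by rewrite /nn (linB Hl) (hom_al Hphi HA HB).
apply: eta_ext => [i|].
  rewrite (Psi_hom1 (etaC A m)) (mkS1_map _ (etaC A m).1 i H0).
  rewrite /Xi_hom_u restr_spec; last exact: (hom_M0 Hphi).
  rewrite (eta1 HA) (eta1 HB) /kk (linB Hl) hom_y. 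

  have E := hom_iter Hphi i (nn A m); have E' := hom_iter Hphi i.+1 (nn A m).
  by rewrite E E' -Hnn.
all: try exact: Hphi.
rewrite (Psi_hom2 (etaC A m)) /Xi_hom_v restr_spec; last exact: (hom_im Hphi).
by rewrite !eta2 (hom_al Hphi HA HB).
Qed.

Section EpsDef.
Context {K : fieldType}.
Definition epu (rho : QRep K) (q : Mu (Xi_obj (Psi_obj rho))) : Mu rho := spval (spval q).1 0.
Definition epv (rho : QRep K) (q : Mv (Xi_obj (Psi_obj rho))) : Mv rho := (spval q).2.
Definition epu' (rho : QRep K) (u : Mu rho) : Mu (Xi_obj (Psi_obj rho)) :=
  sp_in (M0_sp (Psi_obj rho)) ((e0 u, 0) : wM (Psi_obj rho)).
Definition epv' (rho : QRep K) (w : Mv rho) : Mv (Xi_obj (Psi_obj rho)) :=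
  sp_in (imalpha_sp (Psi_obj rho)) ((0, w) : wM (Psi_obj rho)).
End EpsDef.

Section Eps.
Context {K : fieldType} (rho : QRep K) (HD : is_D_obj rho).
Local Notation P := (Psi_obj rho).
Local Notation pe := (@pair_ext (S1tensor (Mu rho)) (Mv rho)).
Let HP := Psi_WSP HD.

Lemma e0_M0 u : sp_mem (M0_sp P) ((e0 u, 0) : wM P).
Proof.
rewrite /= PsixE; apply: pe; last by rewrite Px2 linear0.
rewrite Px1; apply: S1_eq => i; rewrite (mkS1_shift (e0 u)) e0E //.
Qed.

Lemma im_mem w : sp_mem (imalpha_sp P) ((0, w) : wM P).
Proof. by exists ((0, w) : wM P); rewrite PsiaE. Qed.

Lemma epu'_val u : spval (epu' rho u) = (e0 u, 0).
Proof. by rewrite /epu' sp_inK //; exact: e0_M0. Qed.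
Lemma epv'_val w : spval (epv' rho w) = (0, w).
Proof. by rewrite /epv' sp_inK //; exact: im_mem. Qed.

Lemma M0_form (q : Mu (Xi_obj P)) : spval q = (e0 (epu rho q), 0).
Proof.
have Hq : wx P (spval q) = 0 := spvalM q.
rewrite PsixE in Hq.
have H1 := f_equal fst Hq; have H2 := f_equal snd Hq.
rewrite Px1 in H1; rewrite Px2 in H2.
apply: pe.
  apply: S1_eq => i; rewrite e0E; case: i => [|i] //.
  have := f_equal (fun s => spval s i) H1; rewrite (mkS1_shift (spval q).1) => -> //.
rewrite /=; have := f_equal (dfinv (psi_f rho)) H2; rewrite (fK HD) (finv0 HD) => -> //.
Qed.

Lemma im_form (q : Mv (Xi_obj P)) : spval q = (0, epv rho q).
Proof.
have [u Hu] : sp_mem (imalpha_sp P) (spval q) := spvalM q.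
rewrite /epv -Hu PsiaE //.
Qed.

Lemma eps_hom : is_D_hom (Xi_obj P) rho (epu rho) (epv rho).
Proof.
split.
- move=> a p q; rewrite /epu sp_valL; exact: erefl.
- move=> a p q; rewrite /epv sp_valL; exact: erefl.
- move=> q; rewrite /epu (Xi_e_spec HP) PsiaE (PsiyE HD).
  set z := spval q.
  transitivity (spval (Psi_y_fun rho z).1 0 - 0); first by [].
  by rewrite subr0 (Py1 rho z) (mkS1_cons z.1).
- move=> q; rewrite /epv (Xi_f_spec HP) PsixE (Px2 rho) //.
Qed.

Lemma eps'_hom : is_D_hom rho (Xi_obj P) (epu' rho) (epv' rho).
Proof.
split.
- move=> a u v; apply: sp_eq; rewrite sp_valL !epu'_val; apply: pe.
    apply: S1_eq => i.
    transitivity (a *: spval (e0 u) i + spval (e0 v) i); last by [].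
    by rewrite !e0E; case: i => [|i] //=; rewrite scaler0 addr0.
  by transitivity (a *: (0 : Mv rho) + 0); rewrite // scaler0 addr0.
- move=> a u v; apply: sp_eq; rewrite sp_valL !epv'_val; apply: pe => //.
  by transitivity (a *: (0 : S1tensor (Mu rho)) + 0); rewrite // scaler0 addr0.
- move=> w; apply: sp_eq; rewrite epu'_val (Xi_e_spec HP) epv'_val PsiaE (PsiyE HD).
  apply: pe.
    apply: S1_eq => i; rewrite e0E.
    transitivity (spval (Psi_y_fun rho ((0, w) : wM P)).1 i - 0); last by [].
    by rewrite subr0 (Py1 rho ((0, w) : wM P)) (mkS1_cons ((0, w) : wM P).1); case: i.
  transitivity ((Psi_y_fun rho ((0, w) : wM P)).2 - (Psi_y_fun rho ((0, w) : wM P)).2);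
    last by []. by rewrite subrr.
- move=> w; apply: sp_eq; rewrite epv'_val (Xi_f_spec HP) epv'_val PsixE.
  apply: pe; last by rewrite Px2.
  by rewrite Px1; apply: S1_eq => i; rewrite (mkS1_shift ((0, w) : wM P).1).
Qed.

Lemma eps_can1 : cancel (epu rho) (epu' rho) /\ cancel (epu' rho) (epu rho).
Proof.
split.
  by move=> q; apply: sp_eq; rewrite epu'_val (M0_form q).
by move=> u; rewrite /epu epu'_val /= e0E.
Qed.

Lemma eps_can2 : cancel (epv rho) (epv' rho) /\ cancel (epv' rho) (epv rho).
Proof.
split.
  by move=> q; apply: sp_eq; rewrite epv'_val (im_form q).
by move=> w; rewrite /epv epv'_val.
Qed.
End Eps.

Lemma eps_nat {K : fieldType} (rho sigma : QRep K) (phu : Mu rho -> Mu sigma) (phv : Mv rho -> Mv sigma) :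
  is_D_obj rho -> is_D_obj sigma -> is_D_hom rho sigma phu phv ->
  phu \o epu rho
    =1 epu sigma \o Xi_hom_u (Psi_obj rho) (Psi_obj sigma) (Psi_hom rho sigma phu phv) /\
  phv \o epv rho
    =1 epv sigma \o Xi_hom_v (Psi_obj rho) (Psi_obj sigma) (Psi_hom rho sigma phu phv).
Proof.
move=> Hr Hs Hh; have HW := Psi_hom_WSP _ _ _ _ Hr Hs Hh.
have H0u := lin0 (Dh_u _ _ _ _ Hh).
split=> q; rewrite /comp.
  rewrite /epu /Xi_hom_u restr_spec; last exact: (hom_M0 HW).
  by rewrite (Psi_hom1 (spval q)) (mkS1_map phu (spval q).1 0 H0u).
rewrite /epv /Xi_hom_v restr_spec; last exact: (hom_im HW).
by rewrite (Psi_hom2 (spval q)).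
Qed.
Theorem theorem6 (K : fieldType) :
  (* Xi : C -> D is a functor (as recalled in the context) *)
  [/\ forall A : WSP K, is_WSP_obj A -> is_D_obj (Xi_obj A),
      forall (A B : WSP K) (phi : wM A -> wM B),
        is_WSP_obj A -> is_WSP_obj B -> is_WSP_hom A B phi ->
        is_D_hom (Xi_obj A) (Xi_obj B) (Xi_hom_u A B phi) (Xi_hom_v A B phi),
      forall A : WSP K, is_WSP_obj A ->
        Xi_hom_u A A id =1 id /\ Xi_hom_v A A id =1 id
    & forall (A B C : WSP K) (phi : wM A -> wM B) (chi : wM B -> wM C),
        is_WSP_obj A -> is_WSP_obj B -> is_WSP_obj C ->
        is_WSP_hom A B phi -> is_WSP_hom B C chi ->
        Xi_hom_u A C (chi \o phi) =1 Xi_hom_u B C chi \o Xi_hom_u A B phi /\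
        Xi_hom_v A C (chi \o phi) =1 Xi_hom_v B C chi \o Xi_hom_v A B phi] /\
  (* Psi : D -> C is a functor *)
  [/\ forall rho : QRep K, is_D_obj rho -> is_WSP_obj (Psi_obj rho),
      forall (rho sigma : QRep K) (phu : Mu rho -> Mu sigma) (phv : Mv rho -> Mv sigma),
        is_D_obj rho -> is_D_obj sigma -> is_D_hom rho sigma phu phv ->
        is_WSP_hom (Psi_obj rho) (Psi_obj sigma) (Psi_hom rho sigma phu phv),
      forall rho : QRep K, is_D_obj rho -> Psi_hom rho rho id id =1 id
    & forall (rho sigma tau : QRep K)
        (phu : Mu rho -> Mu sigma) (phv : Mv rho -> Mv sigma)
        (chu : Mu sigma -> Mu tau) (chv : Mv sigma -> Mv tau),
        is_D_obj rho -> is_D_obj sigma -> is_D_obj tau ->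
        is_D_hom rho sigma phu phv -> is_D_hom sigma tau chu chv ->
        Psi_hom rho tau (chu \o phu) (chv \o phv)
          =1 Psi_hom sigma tau chu chv \o Psi_hom rho sigma phu phv] /\
  (* a natural isomorphism Id_C ~= Psi o Xi *)
  (exists (eta : forall A : WSP K, wM A -> wM (Psi_obj (Xi_obj A)))
          (eta' : forall A : WSP K, wM (Psi_obj (Xi_obj A)) -> wM A),
     (forall A : WSP K, is_WSP_obj A ->
        [/\ is_WSP_hom A (Psi_obj (Xi_obj A)) (eta A),
            is_WSP_hom (Psi_obj (Xi_obj A)) A (eta' A),
            cancel (eta A) (eta' A) & cancel (eta' A) (eta A)]) /\
     (forall (A B : WSP K) (phi : wM A -> wM B),
        is_WSP_obj A -> is_WSP_obj B -> is_WSP_hom A B phi ->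
        Psi_hom (Xi_obj A) (Xi_obj B) (Xi_hom_u A B phi) (Xi_hom_v A B phi) \o eta A
          =1 eta B \o phi)) /\
  (* a natural isomorphism Xi o Psi ~= Id_D *)
  (exists (epu : forall rho : QRep K, Mu (Xi_obj (Psi_obj rho)) -> Mu rho)
          (epv : forall rho : QRep K, Mv (Xi_obj (Psi_obj rho)) -> Mv rho)
          (epu' : forall rho : QRep K, Mu rho -> Mu (Xi_obj (Psi_obj rho)))
          (epv' : forall rho : QRep K, Mv rho -> Mv (Xi_obj (Psi_obj rho))),
     (forall rho : QRep K, is_D_obj rho ->
        [/\ is_D_hom (Xi_obj (Psi_obj rho)) rho (epu rho) (epv rho),
            is_D_hom rho (Xi_obj (Psi_obj rho)) (epu' rho) (epv' rho),
            cancel (epu rho) (epu' rho) /\ cancel (epu' rho) (epu rho)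
          & cancel (epv rho) (epv' rho) /\ cancel (epv' rho) (epv rho)]) /\
     (forall (rho sigma : QRep K) (phu : Mu rho -> Mu sigma) (phv : Mv rho -> Mv sigma),
        is_D_obj rho -> is_D_obj sigma -> is_D_hom rho sigma phu phv ->
        phu \o epu rho
          =1 epu sigma \o Xi_hom_u (Psi_obj rho) (Psi_obj sigma) (Psi_hom rho sigma phu phv) /\
        phv \o epv rho
          =1 epv sigma \o Xi_hom_v (Psi_obj rho) (Psi_obj sigma) (Psi_hom rho sigma phu phv))).
Proof.
split.
  split.
  - move=> A HA; exact: (Xi_D HA).
  - move=> A B phi HA HB Hphi; exact: Xi_hom_D.
  - move=> A _; exact: Xi_id.
  - move=> A B C phi chi _ _ _ Hp Hc; exact: Xi_comp.
split.
  split.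
  - move=> rho HD; exact: (Psi_WSP HD).
  - move=> rho sigma phu phv Hr Hs Hh; exact: Psi_hom_WSP.
  - move=> rho _; exact: Psi_id.
  - move=> rho sigma tau phu phv chu chv _ _ _ H1 H2; exact: Psi_comp.
split.
  exists etaC, etainv; split.
  - move=> A HA; split; [exact: (eta_hom HA) | exact: (etainv_hom HA) | exact: (etaK HA) | exact: (etaK' HA)].
  - move=> A B phi HA HB Hphi; exact: eta_nat.
exists epu, epv, epu', epv'; split.
- move=> rho HD; split; [exact: eps_hom | exact: eps'_hom | exact: eps_can1 | exact: eps_can2].
- move=> rho sigma phu phv Hr Hs Hh; exact: eps_nat.
Qed.
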